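(* Let $\omega>0$, $\bar r>0$, $\bar v>0$ and $T>0$ be such that $e^{AT}\begin{bmatrix}-\bar r\\ \bar v\end{bmatrix}=\begin{bmatrix}\bar r\\ \bar v\end{bmatrix}$, where $A=\begin{bmatrix}0&1\\ \omega^2&0\end{bmatrix}$, and let $B=\begin{bmatrix}0\\-\omega^2\end{bmatrix}$. Consider the hybrid system with state $(x,\tau)$, $x=(x_p,x_v)\in\mathbb R^2$, input $u\in\mathbb R$: flow: $\dot x=Ax+Bu$, $\dot\tau=1$, for $(x,\tau)\in\mathcal C\times[-T,2T]$; jump: $x^+=x+\begin{bmatrix}-2\bar r\\0\end{bmatrix}$, $\tau^+=\tau-T$, for $(x,\tau)\in\mathcal D\times[-T,2T]$, where $\mathcal C=[-\bar r,\bar r]\times\mathbb R$ and $\mathcal D=\{x\in\mathcal C: x_p=\bar r\}$. Let $x_r(\tau)=e^{A\tau}\begin{bmatrix}-\bar r\\ \bar v\end{bmatrix}$ and define the tracking error $\varepsilon=(\varepsilon_p,\varepsilon_v)=x-x_r(\tau)$. Then along solutions the tracking error evolves according to the hybrid dynamics $$\dot\varepsilon=A\varepsilon+Bu \ \text{(during flows)},\qquad \varepsilon^+=\varepsilon+\bar r\begin{bmatrix}\eta(\varepsilon_p)+\frac1{\eta(\varepsilon_p)}-2\\[2pt] \omega\Big(\frac1{\eta(\varepsilon_p)}-\eta(\varepsilon_p)\Big)\end{bmatrix}\ \text{(at jumps)},$$ where $\eta(\varepsilon_p):=\dfrac{\varepsilon_p-\bar r+\sqrt{\varepsilon_p^2-2\bar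 r\varepsilon_p+(\bar v/\omega)^2}}{\bar v/\omega-\bar r}$.
   Context: Solutions of the hybrid system are understood in the standard hybrid-time-domain sense (Goebel–Sanfelice–Teel). It is known (under the stated periodicity condition) that $\bar v/\omega-\bar r>0$, so $\eta$ is well defined and positive. *)

(* Defs.v *)
From Stdlib Require Import Reals.
From Coquelicot Require Import Coquelicot.
From mathcomp Require Import all_boot all_algebra.
From mathcomp Require Import Rstruct.
Set Implicit Arguments. Unset Strict Implicit. Unset Printing Implicit Defensive.
Import GRing.Theory.
Local Open Scope ring_scope.

Definition mx2 (a b c d : R) : 'M[R]_2 :=
  \matrix_(i < 2, j < 2)
    if (i == 0 :> nat) then (if (j == 0 :> nat) then a else b)
    else (if (j == 0 :> nat) then c else d).
Definition cv2 (a b : R) : 'cV[R]_2 :=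
  \col_(i < 2) if (i == 0 :> nat) then a else b.

Definition mexp (M : 'M[R]_2) : 'M[R]_2 :=
  \matrix_(i < 2, j < 2) Series (fun k => ((M ^+ k) i j / (k`!)%:R)).

Definition Amat (w : R) : 'M[R]_2 := mx2 0 1 (w ^+ 2) 0.
Definition Bvec (w : R) : 'cV[R]_2 := cv2 0 (- w ^+ 2).

Definition xref (w rb vb tau : R) : 'cV[R]_2 :=
  mexp (tau *: Amat w) *m cv2 (- rb) vb.

Definition etaf (w rb vb e : R) : R :=
  ((e - rb + sqrt (e ^+ 2 - 2 * rb * e + (vb / w) ^+ 2)) / (vb / w - rb))%R.

Definition ip : 'I_2 := ord0.        (* position component *)
Definition iv : 'I_2 := ord_max.     (* velocity component *)

(* Main.v *)
Require Import Defs.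
From Stdlib Require Import Reals.
From Coquelicot Require Import Coquelicot.
From mathcomp Require Import all_boot all_algebra.
From mathcomp Require Import Rstruct.
From mathcomp Require Import all_order ring lra.
Import Order.TTheory GRing.Theory Num.Theory.
Local Open Scope ring_scope.

Lemma mx2_ext (M : 'M[R]_2) a b c d : M ord0 ord0 = a -> M ord0 ord_max = b ->
  M ord_max ord0 = c -> M ord_max ord_max = d -> M = mx2 a b c d.
Proof.
move=> h1 h2 h3 h4; apply/matrixP => i j; rewrite !mxE.
case: i => [[|[|//]] hi]; case: j => [[|[|//]] hj] /=.
- by rewrite -h1; congr (M _ _); apply: val_inj.
- by rewrite -h2; congr (M _ _); apply: val_inj.
- by rewrite -h3; congr (M _ _); apply: val_inj.
- by rewrite -h4; congr (M _ _); apply: val_inj.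
Qed.

Definition ck (w t : R) k := ((w * t) ^+ k + (- (w * t)) ^+ k) / 2.
Definition sk (w t : R) k := ((w * t) ^+ k - (- (w * t)) ^+ k) / 2.

Lemma powA (w t : R) k : w != 0 ->
  (t *: Amat w) ^+ k = mx2 (ck w t k) (sk w t k / w) (w * sk w t k) (ck w t k).
Proof.
move=> w0; elim: k => [|k IH].
  rewrite expr0; apply: mx2_ext; rewrite !mxE /ck /sk /= !expr0 ?RealsE; field; (by []) || exact: w0.
rewrite exprS IH; apply: mx2_ext; rewrite !mxE !big_ord_recl big_ord0 !mxE /ck /sk /= !exprS ?RealsE.
all: field; (by []) || exact: w0.
Qed.

Lemma ser_exp (y : R) : is_series (fun k => y ^+ k / (k`!)%:R) (exp y).
Proof.
have := is_exp_Reals y; rewrite /is_pseries.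
apply: is_series_ext => n.
rewrite pow_n_pow /scal /= /mult /= RpowE INRE factE RmultE mulrC //.
Qed.

Lemma ser_comb (a b y : R) :
  is_series (fun k => (a * y ^+ k + b * (- y) ^+ k) / (k`!)%:R) (a * exp y + b * exp (- y)).
Proof.
have h := is_series_plus _ _ _ _ (is_series_scal_l a _ _ (ser_exp y)) (is_series_scal_l b _ _ (ser_exp (- y))).
move: h; rewrite /plus /scal /= /mult /=.
apply: is_series_ext => n.
rewrite /plus /scal /= /mult /= !RealsE; field; by rewrite pnatr_eq0 -lt0n fact_gt0.
Qed.

Definition chf (x : R) := (exp x + exp (- x)) / 2.
Definition shf (x : R) := (exp x - exp (- x)) / 2.

Lemma fact_neq0 k : (k`!)%:R != 0 :> R.
Proof. by rewrite pnatr_eq0 -lt0n fact_gt0. Qed.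

Lemma mexpA (w t : R) : w != 0 ->
  mexp (t *: Amat w) = mx2 (chf (w * t)) (shf (w * t) / w) (w * shf (w * t)) (chf (w * t)).
Proof.
move=> w0; apply: mx2_ext; rewrite mxE.
- have -> : chf (w * t) = (1/2) * exp (w * t) + (1/2) * exp (- (w * t)) by rewrite /chf; field.
  apply: is_series_unique; apply: is_series_ext (ser_comb _ _ _) => k.
  rewrite powA // !mxE /ck /sk /= ?RealsE; field; exact: fact_neq0.
- have -> : Rdiv (shf (w * t)) w = (1/(2 * w)) * exp (w * t) + (-1/(2*w)) * exp (- (w * t)) by rewrite /shf ?RealsE; field.
  apply: is_series_unique; apply: is_series_ext (ser_comb _ _ _) => k.
  rewrite powA // !mxE /ck /sk /= ?RealsE; field; rewrite ?fact_neq0 ?w0 //.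
- have -> : Rmult w (shf (w * t)) = (w/2) * exp (w * t) + (-w/2) * exp (- (w * t)) by rewrite /shf ?RealsE; field.
  apply: is_series_unique; apply: is_series_ext (ser_comb _ _ _) => k.
  rewrite powA // !mxE /ck /sk /= ?RealsE; field; exact: fact_neq0.
- have -> : chf (w * t) = (1/2) * exp (w * t) + (1/2) * exp (- (w * t)) by rewrite /chf; field.
  apply: is_series_unique; apply: is_series_ext (ser_comb _ _ _) => k.
  rewrite powA // !mxE /ck /sk /= ?RealsE; field; exact: fact_neq0.
Qed.

Definition xr0 (w rb vb tau : R) := chf (w * tau) * (- rb) + shf (w * tau) / w * vb.
Definition xr1 (w rb vb tau : R) := w * shf (w * tau) * (- rb) + chf (w * tau) * vb.

Lemma xrefE w rb vb tau : w != 0 ->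
  xref w rb vb tau = cv2 (xr0 w rb vb tau) (xr1 w rb vb tau).
Proof.
move=> w0; rewrite /xref mexpA //; apply/matrixP => i j; rewrite !mxE !big_ord_recl big_ord0 !mxE.
case: i => [[|[|//]] hi] /=; by rewrite /xr0 /xr1 addr0.
Qed.

Lemma d_xr0 w rb vb tau : w != 0 ->
  is_derive (xr0 w rb vb) tau (xr1 w rb vb tau).
Proof.
move=> w0.
apply: (is_derive_ext (fun s => Rplus (Rmult (Rmult (Rplus (exp (w * s)) (exp (- (w * s)))) (Rinv 2)) (- rb))
   (Rmult (Rmult (Rmult (Rminus (exp (w * s)) (exp (- (w * s)))) (Rinv 2)) (Rinv w)) vb))).
  by move=> s; rewrite /xr0 /chf /shf !RealsE.
auto_derive => //.
rewrite /xr1 /chf /shf !RealsE /=; field; exact: w0.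
Qed.

Lemma d_xr1 w rb vb tau : w != 0 ->
  is_derive (xr1 w rb vb) tau (w ^+ 2 * xr0 w rb vb tau).
Proof.
move=> w0.
apply: (is_derive_ext (fun s => Rplus (Rmult (Rmult w (Rmult (Rminus (exp (w * s)) (exp (- (w * s)))) (Rinv 2))) (- rb))
   (Rmult (Rmult (Rplus (exp (w * s)) (exp (- (w * s)))) (Rinv 2)) vb))).
  by move=> s; rewrite /xr1 /chf /shf !RealsE.
auto_derive => //.
rewrite /xr0 /chf /shf !RealsE /=; field; exact: w0.
Qed.

Lemma ord2P (i : 'I_2) : i = ip \/ i = iv.
Proof. case: i => [[|[|//]] hi]; [left|right]; exact: val_inj. Qed.

Lemma deriv_eq (f : R -> R) (x l l' : R) : is_derive f x l -> l = l' -> is_derive f x l'.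
Proof. by move=> h <-. Qed.

Lemma flow_part (w rb vb : R) (hw : 0 < w) :
  (forall (x : R -> 'cV[R]_2) (tau u : R -> R) (t : R),
      (forall i : 'I_2, is_derive (fun s => x s i 0) t
                          ((Amat w *m x t + u t *: Bvec w) i 0)) ->
      is_derive tau t 1 ->
      forall i : 'I_2,
        is_derive (fun s => (x s - xref w rb vb (tau s)) i 0) t
          ((Amat w *m (x t - xref w rb vb (tau t)) + u t *: Bvec w) i 0)).
Proof.
have w0 : w != 0 by rewrite lt0r_neq0.
move=> x tau u t hx htau i.
case: (ord2P i) => ->.
- apply: (is_derive_ext (fun s => minus (x s ip 0) (xr0 w rb vb (tau s)))).
    by move=> s; rewrite xrefE // !mxE.
  apply: deriv_eq; first exact: (is_derive_minus _ _ _ _ _ (hx ip) (is_derive_comp _ _ _ _ _ (@d_xr0 w rb vb (tau t) w0) htau)).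
  rewrite /minus /plus /Hierarchy.opp /scal /= /mult /= xrefE // !mxE !big_ord_recl !big_ord0 !mxE /= ?RealsE.
  ring.
- apply: (is_derive_ext (fun s => minus (x s iv 0) (xr1 w rb vb (tau s)))).
    by move=> s; rewrite xrefE // !mxE.
  apply: deriv_eq; first exact: (is_derive_minus _ _ _ _ _ (hx iv) (is_derive_comp _ _ _ _ _ (@d_xr1 w rb vb (tau t) w0) htau)).
  rewrite /minus /plus /Hierarchy.opp /scal /= /mult /= xrefE // !mxE !big_ord_recl !big_ord0 !mxE /= ?RealsE.
  ring.
Qed.

Lemma expN (y : R) : exp (Ropp y) = Rinv (exp y).
Proof. exact: exp_Ropp. Qed.

Lemma exp_shift (w tau T : R) :
  exp (Rmult w (Rminus tau T)) = Rmult (exp (Rmult w tau)) (Rinv (exp (Rmult w T))).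
Proof. by rewrite -exp_Ropp -exp_plus; congr exp; rewrite !RealsE; ring. Qed.

Lemma sqrt_eq (q y : R) : 0 <= y -> y * y = q -> sqrt q = y.
Proof. by move=> hy <-; rewrite RsqrtE -expr2 sqrtr_sqr ger0_norm. Qed.

Lemma jump_part (w rb vb T : R) (hw : 0 < w) (hrb : 0 < rb) (hvb : 0 < vb) (hT : 0 < T)
  (hper : mexp (T *: Amat w) *m cv2 (- rb) vb = cv2 rb vb) :
  (forall (x : 'cV[R]_2) (tau : R),
      x ip 0 = rb ->
      let eps := x - xref w rb vb tau in
      let et := etaf w rb vb (eps ip 0) in
      (x + cv2 (- (2 * rb)) 0) - xref w rb vb (tau - T)
      = eps + rb *: cv2 (et + et^-1 - 2) (w * (et^-1 - et))).
Proof.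
have w0 : w != 0 by rewrite lt0r_neq0.
move=> x tau hxr eps et.
have h0 : xr0 w rb vb T = rb.
  have := congr1 (fun M : 'cV[R]_2 => M ip 0) hper.
  by rewrite -/(xref w rb vb T) xrefE // !mxE.
move: h0; rewrite /xr0 /chf /shf expN.
set E := exp (Rmult w T).
have hE : 1 < E.
  have := exp_increasing R0 (Rmult w T); rewrite exp_0 => h; apply/RltP; apply: h.
  by apply/RltP; rewrite RealsE mulr_gt0.
rewrite ?RealsE /= => h0.
have E0 : 0 < E by apply: lt_trans hE; exact: ltr01.
have E1 : 0 < E - 1 by rewrite subr_gt0.
have hv : vb = w * rb * (E + 1) / (E - 1).
  have := congr1 (fun z => w * rb * (E + 1) / (E - 1) + (2 * E * w / (E * E - 1)) * (z - rb)) h0.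
  rewrite /= subrr mulr0 addr0 => <-.
  field.
  apply/and4P; split; rewrite ?lt0r_neq0 //.
  have -> : E * E - 1 = (E - 1) * (E + 1) by ring.
  by rewrite mulr_gt0 // addr_gt0.
subst vb.
have a0 : 0 < exp (Rmult w tau) by apply/RltP; exact: exp_pos.
set a := exp (Rmult w tau) in a0 *.
have hep : eps ip 0 = rb - xr0 w rb (w * rb * (E + 1) / (E - 1)) tau by rewrite /eps xrefE // !mxE hxr.
have het : et = E / a.
  rewrite /et hep /etaf /xr0 /chf /shf expN -/a.
  rewrite (@sqrt_eq _ (rb * (E / a + a) / (E - 1))); last first.
    rewrite ?RealsE /=; field.
    by rewrite w0 !lt0r_neq0.
    by apply/ltW; rewrite ?RealsE divr_gt0 // mulr_gt0 // addr_gt0 // divr_gt0.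
  rewrite ?RealsE /=; field.
  rewrite w0 !lt0r_neq0 //=.
  have -> : rb * (E + 1) + - rb * (E - 1) = 2 * rb by ring.
  by rewrite mulr_gt0.
rewrite het /eps !xrefE //; apply/matrixP => i j; rewrite (ord1 j) !mxE.
case: (ord2P i) => -> /=; rewrite /xr0 /xr1 /chf /shf !expN exp_shift -/a -/E ?RealsE /=.
  all: field; by rewrite ?w0 !lt0r_neq0.
Qed.

Theorem lemma1 (w rb vb T : R) (hw : 0 < w) (hrb : 0 < rb) (hvb : 0 < vb) (hT : 0 < T)
  (hper : mexp (T *: Amat w) *m cv2 (- rb) vb = cv2 rb vb) :
  (* flows: along any flowing solution, eps' = A eps + B u *)
  (forall (x : R -> 'cV[R]_2) (tau u : R -> R) (t : R),
      - rb <= x t ip 0 <= rb -> - T <= tau t <= 2 * T ->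
      (forall i : 'I_2, is_derive (fun s => x s i 0) t
                          ((Amat w *m x t + u t *: Bvec w) i 0)) ->
      is_derive tau t 1 ->
      forall i : 'I_2,
        is_derive (fun s => (x s - xref w rb vb (tau s)) i 0) t
          ((Amat w *m (x t - xref w rb vb (tau t)) + u t *: Bvec w) i 0))
  /\
  (* jumps: (x,tau) in D x [-T,2T], x^+ = x + [-2rb;0], tau^+ = tau - T *)
  (forall (x : 'cV[R]_2) (tau : R),
      - rb <= x ip 0 <= rb -> x ip 0 = rb -> - T <= tau <= 2 * T ->
      let eps := x - xref w rb vb tau in
      let et := etaf w rb vb (eps ip 0) in
      (x + cv2 (- (2 * rb)) 0) - xref w rb vb (tau - T)
      = eps + rb *: cv2 (et + et^-1 - 2) (w * (et^-1 - et))).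
Proof.
split.
  move=> x tau u t _ _; exact: flow_part.
move=> x tau _ hxr _; exact: (@jump_part w rb vb T hw hrb hvb hT hper x tau hxr).
Qed.
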